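(* Let $(\Omega,\mathcal A)$ be a measurable space and let $K$ be a random compact set in $\mathbb C^n$. Then the functions $(\omega,z)\mapsto\Phi_{K(\omega)}(z)$ and $(\omega,z)\mapsto V_{K(\omega)}(z)=\log\Phi_{K(\omega)}(z)$ are random functions with values in $\mathbb R\cup\{\infty\}$, i.e. for each $z\in\mathbb C^n$ the maps $\omega\mapsto\Phi_{K(\omega)}(z)$ and $\omega\mapsto V_{K(\omega)}(z)$ are measurable.
   Context: A random compact set is a measurable map from $\Omega$ to the space of non-empty compact subsets of $\mathbb C^n$ with the Hausdorff distance and its Borel $\sigma$-algebra. For non-empty compact $E\subset\mathbb C^n$, the Siciak extremal function is $\Phi_E(z)=\sup\{|p(z)|^{1/\deg p}: p \text{ polynomial on } \mathbb C^n,\ \|p\|_E\le1,\ \deg p\ge1\}$, where $\|p\|_E=\max_E|p|$, and the pluricomplex Green function is $V_E=\log\Phi_E$. *)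

(* Defs.v *)
From HB Require Import structures.
From mathcomp Require Import all_boot all_order all_algebra.
From mathcomp Require Import all_classical all_reals all_analysis measurable_realfun.
From mathcomp Require complex mpoly.
Import complex.ComplexField.

Set Implicit Arguments.
Unset Strict Implicit.
Unset Printing Implicit Defensive.

Import Order.TTheory GRing.Theory Num.Theory.
Import numFieldNormedType.Exports.

Local Open Scope classical_set_scope.
Local Open Scope ring_scope.

(* A point of C^n is given by its real part x and imaginary part y,
   z = x + i y, with x, y in R^n; C^n carries the (product) topology of
   R^n x R^n = R^{2n}. *)
Definition Cn (R : realType) (n : nat) := ('rV[R]_n * 'rV[R]_n)%type.

Definition coordC (R : realType) (n : nat) (z : Cn R n) (j : 'I_n)
  : complex.complex R := complex.Complex (z.1 ord0 j) (z.2 ord0 j).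

Definition distC (R : realType) (n : nat) (z w : Cn R n) : R :=
  Num.sqrt (\sum_(j < n) ((z.1 ord0 j - w.1 ord0 j) ^+ 2
                          + (z.2 ord0 j - w.2 ord0 j) ^+ 2)).

Definition ncompact (R : realType) (n : nat) :=
  {A : set (Cn R n) | A !=set0 /\ compact A}.

Definition dist_pt_set (R : realType) (n : nat) (z : Cn R n)
  (B : set (Cn R n)) : R := inf [set distC z b | b in B].

Definition hausdorff (R : realType) (n : nat) (A B : ncompact R n) : R :=
  Num.max (sup [set dist_pt_set a (proj1_sig B) | a in proj1_sig A])
          (sup [set dist_pt_set b (proj1_sig A) | b in proj1_sig B]).

Definition hausdorff_open (R : realType) (n : nat) (U : set (ncompact R n))
  : Prop :=
  forall A, U A -> exists2 e : R, 0 < e &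
    forall B, hausdorff A B < e -> U B.

Definition hausdorff_borel (R : realType) (n : nat) : set (set (ncompact R n)) :=
  <<s hausdorff_open (n:=n) >>.

Definition random_compact (d : measure_display) (Omega : measurableType d)
  (R : realType) (n : nat) (K : Omega -> ncompact R n) : Prop :=
  forall B, hausdorff_borel B -> measurable (K @^-1` B).

Definition polyC (R : realType) (n : nat) :=
  mpoly.mpoly n (complex.complex R).

Definition poly_eval (R : realType) (n : nat) (p : polyC R n) (z : Cn R n)
  : complex.complex R := mpoly.meval (coordC z) p.

(* total degree: max of the degrees of the monomials in the support (0 for p = 0) *)
Definition poly_deg (R : realType) (n : nat) (p : polyC R n) : nat :=
  (\max_(m <- mpoly.msupp p) mpoly.mdeg m)%N.

Definition modC (R : realType) (x : complex.complex R) : R :=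
  complex.ComplexField.Normc.normc x.

Definition sup_norm_le1 (R : realType) (n : nat) (p : polyC R n)
  (E : set (Cn R n)) : Prop :=
  forall w, E w -> modC (poly_eval p w) <= 1.

Definition siciak (R : realType) (n : nat) (E : set (Cn R n)) (z : Cn R n)
  : \bar R :=
  ereal_sup [set ((modC (poly_eval p z)) `^ ((poly_deg p)%:R^-1))%:E
             | p in [set p : polyC R n | (1 <= poly_deg p)%N /\ sup_norm_le1 p E]].

(* pluricomplex Green function V_E = log Phi_E (log 0 = -oo, log +oo = +oo) *)
Definition green (R : realType) (n : nat) (E : set (Cn R n)) (z : Cn R n)
  : \bar R := lne (siciak E z).

(* Main.v *)
Require Import Defs.
From HB Require Import structures.
From mathcomp Require Import all_boot all_order all_algebra.
From mathcomp Require Import all_classical all_reals all_analysis measurable_realfun.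
From mathcomp Require Import complex ring lra.
From mathcomp Require mpoly.
Import Order.TTheory GRing.Theory Num.Theory.
Import numFieldNormedType.Exports.
Import ComplexField.
Local Open Scope classical_set_scope.
Local Open Scope ring_scope.

Lemma mx_entry_le (R : realType) m k (x : 'M[R]_(m, k)) i j : `|x i j| <= `|x|.
Proof.
rewrite [X in _ <= X]/Num.norm /= mx_normrE.
exact: (le_bigmax _ (fun ij : 'I_m * 'I_k => `|x ij.1 ij.2|) (i, j)).
Qed.

Lemma cpt_bnd (R : realType) (n : nat) (A : set (Cn R n)) : compact A ->
  exists M : R, 0 <= M /\ forall x, A x -> forall j,
    `|x.1 ord0 j| <= M /\ `|x.2 ord0 j| <= M.
Proof.
move=> /compact_bounded [M [Mr HM]].
exists (Num.max M 0 + 1); split.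
  by rewrite addr_ge0 // le_max lexx orbT.
move=> x Ax j.
have hM : M < Num.max M 0 + 1.
  by rewrite (le_lt_trans (_ : M <= Num.max M 0)) ?le_max ?lexx // ltrDl.
have /= Hx := HM _ hM x Ax; rewrite prod_normE in Hx.
have h1 : `|x.1 ord0 j| <= `|x.1| := @mx_entry_le _ _ _ _ ord0 j.
have h2 : `|x.2 ord0 j| <= `|x.2| := @mx_entry_le _ _ _ _ ord0 j.
split.
  apply: (le_trans h1); apply: le_trans Hx.
  by rewrite le_max lexx.
apply: (le_trans h2); apply: le_trans Hx.
by rewrite le_max lexx orbT.
Qed.

Section CX.
Variable R : realType.
Local Notation C := (complex R).

Lemma nCE (x : C) : `|x| = ((modC x)%:C)%C.
Proof. by case: x => a b; rewrite normc_def. Qed.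

Lemma modC_ge0 (x : C) : 0 <= modC x.
Proof. by case: x => a b; rewrite /modC /=; exact: sqrtr_ge0. Qed.

Lemma modCD (x y : C) : modC (x + y) <= modC x + modC y.
Proof. by rewrite -lecR rmorphD /= -!nCE ler_normD. Qed.

Lemma modCM (x y : C) : modC (x * y) = modC x * modC y.
Proof. exact: Normc.normcM. Qed.

Lemma modCN (x : C) : modC (- x) = modC x.
Proof. by apply: complexI; rewrite -!nCE normrN. Qed.

Lemma modCE (a b : R) : modC (Complex a b) = Num.sqrt (a ^+ 2 + b ^+ 2).
Proof. by []. Qed.

Lemma modC_le_sum (a b : R) : modC (Complex a b) <= `|a| + `|b|.
Proof.
rewrite modCE -(@ger0_norm _ (`|a| + `|b|)) ?addr_ge0 //.
rewrite -sqrtr_sqr ler_sqrt ?exprn_ge0 ?addr_ge0 ?sqr_ge0 //.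
rewrite sqrrD !real_normK ?num_real //.
by have := mulr_ge0 (normr_ge0 a) (normr_ge0 b); lra.
Qed.

Lemma modC1 : modC (1 : C) = 1.
Proof. exact: Normc.normc1. Qed.

Variable n : nat.

Definition bnd (Rb : R) (w : Cn R n) := forall j, modC (coordC w j) <= Rb.

Definition LipP (f : Cn R n -> C) := forall Rb : R, exists L Mb : R,
  [/\ 0 <= L, 0 <= Mb & forall w e, bnd Rb w -> bnd Rb e ->
     modC (f w) <= Mb /\ modC (f w - f e) <= L * distC w e].

Lemma distC_ge0 (w e : Cn R n) : 0 <= distC w e.
Proof. exact: sqrtr_ge0. Qed.

Lemma coord_dist (w e : Cn R n) j :
  modC (coordC w j - coordC e j) <= distC w e.
Proof.
rewrite /coordC /distC.
have -> : (Complex (w.1 ord0 j) (w.2 ord0 j) - Complex (e.1 ord0 j) (e.2 ord0 j)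
   = Complex (w.1 ord0 j - e.1 ord0 j) (w.2 ord0 j - e.2 ord0 j))%C by [].
rewrite modCE ler_sqrt; last first.
  by apply: sumr_ge0 => i _; rewrite addr_ge0 ?sqr_ge0.
rewrite (bigD1 j) //= lerDl.
by apply: sumr_ge0 => i _; rewrite addr_ge0 ?sqr_ge0.
Qed.

Lemma Lip_ext f g : f =1 g -> LipP f -> LipP g.
Proof.
move=> fg Hf Rb; have [L [Mb [L0 M0 H]]] := Hf Rb.
by exists L, Mb; split => // w e bw be; rewrite -!fg; exact: H.
Qed.

Lemma LipC (c : C) : LipP (fun _ => c).
Proof.
move=> Rb; exists 0, (modC c); split => //; first exact: modC_ge0.
by move=> w e _ _; rewrite subrr mul0r; split => //; rewrite /modC /= expr0n /= addr0 sqrtr0.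
Qed.

Lemma LipCoord j : LipP (fun w => coordC w j).
Proof.
move=> Rb; exists 1, (Num.max Rb 0); split => //; first by rewrite le_max lexx orbT.
move=> w e bw be; split; first by apply: le_trans (bw j) _; rewrite le_max lexx.
by rewrite mul1r coord_dist.
Qed.

Lemma LipD f g : LipP f -> LipP g -> LipP (fun w => f w + g w).
Proof.
move=> Hf Hg Rb; have [L1 [M1 [L10 M10 H1]]] := Hf Rb.
have [L2 [M2 [L20 M20 H2]]] := Hg Rb.
exists (L1 + L2), (M1 + M2); split; rewrite ?addr_ge0 //.
move=> w e bw be; have [h1 h1'] := H1 w e bw be; have [h2 h2'] := H2 w e bw be.
split; first by apply: le_trans (modCD _ _) _; exact: lerD.
have -> : f w + g w - (f e + g e) = (f w - f e) + (g w - g e) by ring.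
apply: le_trans (modCD _ _) _; rewrite mulrDl; exact: lerD.
Qed.

Lemma LipM f g : LipP f -> LipP g -> LipP (fun w => f w * g w).
Proof.
move=> Hf Hg Rb; have [L1 [M1 [L10 M10 H1]]] := Hf Rb.
have [L2 [M2 [L20 M20 H2]]] := Hg Rb.
exists (M1 * L2 + M2 * L1), (M1 * M2); split; rewrite ?addr_ge0 ?mulr_ge0 //.
move=> w e bw be; have [h1 h1'] := H1 w e bw be; have [h2 h2'] := H2 w e bw be.
have [h1e _] := H1 e e be be.
have [h2e _] := H2 e e be be.
split; first by rewrite modCM ler_pM ?modC_ge0.
have -> : f w * g w - f e * g e = f w * (g w - g e) + (f w - f e) * g e by ring.
apply: le_trans (modCD _ _) _; rewrite !modCM.
have -> : (M1 * L2 + M2 * L1) * distC w e = M1 * (L2 * distC w e) + (L1 * distC w e) * M2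
  by ring.
by apply: lerD; apply: ler_pM; rewrite ?modC_ge0.
Qed.

Lemma Lip_sum (I : Type) (r : seq I) (F : I -> Cn R n -> C) :
  (forall i, LipP (F i)) -> LipP (fun w => \sum_(i <- r) F i w).
Proof.
move=> HF; elim: r => [|i r IH].
  by apply: (Lip_ext (fun _ => 0)) => [w|]; rewrite ?big_nil //; exact: LipC.
apply: (Lip_ext (fun w => F i w + \sum_(j <- r) F j w)) => [w|].
  by rewrite big_cons.
exact: LipD.
Qed.

Lemma Lip_prod (I : Type) (r : seq I) (F : I -> Cn R n -> C) :
  (forall i, LipP (F i)) -> LipP (fun w => \prod_(i <- r) F i w).
Proof.
move=> HF; elim: r => [|i r IH].
  by apply: (Lip_ext (fun _ => 1)) => [w|]; rewrite ?big_nil //; exact: LipC.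
apply: (Lip_ext (fun w => F i w * \prod_(j <- r) F j w)) => [w|].
  by rewrite big_cons.
exact: LipM.
Qed.

Lemma LipX f k : LipP f -> LipP (fun w => f w ^+ k).
Proof.
move=> Hf; elim: k => [|k IH].
  by apply: (Lip_ext (fun _ => 1)) => [w|]; rewrite ?expr0 //; exact: LipC.
apply: (Lip_ext (fun w => f w * f w ^+ k)) => [w|]; first by rewrite exprS.
exact: LipM.
Qed.

Lemma Lip_poly (p : Defs.polyC R n) : LipP (fun w => poly_eval p w).
Proof.
apply: (Lip_ext (fun w => \sum_(m <- mpoly.msupp p)
    mpoly.mcoeff m p * \prod_(i < n) coordC w i ^+ mpoly.fun_of_multinom m i)).
  by move=> w; rewrite /poly_eval mpoly.mevalE.
apply: Lip_sum => m; apply: LipM; first exact: LipC.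
by apply: Lip_prod => i; apply: LipX; exact: LipCoord.
Qed.


Lemma near_bound (E : set (Cn R n)) (p : Defs.polyC R n) (M : R) :
  compact E -> 1 < M -> sup_norm_le1 p E ->
  exists2 δ : R, 0 < δ & forall w e, E e -> distC w e < δ ->
    modC (poly_eval p w) <= M.
Proof.
move=> cE M1 Hp.
have [B0 [B00 HB]] := @cpt_bnd _ _ _ cE.
have [L [Mb [L0 Mb0 HL]]] := Lip_poly p (B0 + B0 + 1).
set t := (M - 1) / (L + 1).
have t0 : 0 < t by rewrite divr_gt0 // ?subr_gt0 // ltr_wpDl.
have tL : t * (L + 1) = M - 1 by rewrite /t divfK // gt_eqF // ltr_wpDl.
exists (Num.min 1 t); first by rewrite lt_min ltr01 t0.
move=> w e Ee; rewrite lt_min => /andP[d1 dt].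
have be : bnd (B0 + B0 + 1) e.
  move=> j; have [h1 h2] := HB e Ee j.
  apply: le_trans (modC_le_sum _ _) _; rewrite -addrA.
  by apply: lerD => //; rewrite ler_wpDr.
have bw : bnd (B0 + B0 + 1) w.
  move=> j; have [h1 h2] := HB e Ee j.
  have -> : coordC w j = coordC e j + (coordC w j - coordC e j) by ring.
  apply: le_trans (modCD _ _) _; apply: lerD.
    by apply: le_trans (modC_le_sum _ _) _; exact: lerD.
  exact: le_trans (coord_dist _ _ _) (ltW d1).
have [_ Hd] := HL w e bw be.
have -> : poly_eval p w = poly_eval p e + (poly_eval p w - poly_eval p e) by ring.
apply: le_trans (modCD _ _) _.
have he := Hp e Ee.
have d0 := distC_ge0 w e.
have : L * distC w e <= L * t by apply: ler_wpM2l => //; exact: ltW.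
by nra.
Qed.

Lemma haus_close (A B : ncompact R n) (δ : R) w :
  hausdorff A B < δ -> proj1_sig B w ->
  exists2 e, proj1_sig A e & distC w e < δ.
Proof.
case: A => [A [A0 cA]]; case: B => [B [B0 cB]] /= hAB Bw.
have [a0 Aa0] := A0.
have [BA [BA0 HA]] := @cpt_bnd _ _ _ cA.
have [BB [BB0 HB]] := @cpt_bnd _ _ _ cB.
have lb : forall b, has_lbound [set distC b a | a in A].
  by move=> b; exists 0 => _ [a _ <-]; exact: distC_ge0.
have dle : forall b a, A a -> dist_pt_set b A <= distC b a.
  by move=> b a Aa; apply: ge_inf => //; exists a.
set T := Num.sqrt ((((BA + BB) ^+ 2) + ((BA + BB) ^+ 2)) *+ n).
have ub : has_ubound [set dist_pt_set b A | b in B].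
  exists T => _ [b Bb <-]; apply: le_trans (dle b a0 Aa0) _.
  rewrite /distC /T ler_sqrt; last first.
    by rewrite mulrn_wge0 // addr_ge0 // sqr_ge0.
  apply: (@le_trans _ _ (\sum_(j < n) (((BA + BB) ^+ 2) + ((BA + BB) ^+ 2)))); last first.
    by rewrite sumr_const card_ord.
  apply: ler_sum => j _.
  have [h1 h2] := HA a0 Aa0 j; have [h3 h4] := HB b Bb j.
  have sq : forall x y : R, `|x| <= BB -> `|y| <= BA -> (x - y) ^+ 2 <= (BA + BB) ^+ 2.
    move=> x y; rewrite !ler_norml => /andP[? ?] /andP[? ?]; nra.
  by apply: lerD; apply: sq.
have hw : dist_pt_set w A < δ.
  apply: le_lt_trans hAB.
  have h1 : dist_pt_set w A <= sup [set dist_pt_set b A | b in B].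
    by apply: ub_le_sup => //; exists w.
  apply: le_trans h1 _.
  by rewrite /hausdorff /= le_max lexx orbT.
have [_ [e Ae <-] lt] := inf_lt (ex_intro _ (distC w a0) (ex_intro2 _ _ a0 Aa0 erefl)) hw.
by exists e.
Qed.


Lemma exists_mu (a c : R) : 0 <= c -> a < c ->
  exists mu : R, [/\ 0 < mu, mu < 1 & a < mu * c].
Proof.
move=> c0 ac; have [a0|a0] := leP a 0.
  by exists (1 / 2); split; lra.
have c0' : 0 < c by lra.
have ac1 : a / c < 1 by rewrite ltr_pdivrMr // mul1r.
have ac0 : 0 < a / c by rewrite divr_gt0.
have e : a / c * c = a by rewrite divfK // gt_eqF.
exists ((1 + a / c) / 2); split; [lra|lra|].
have -> : (1 + a / c) / 2 * c = (c + a / c * c) / 2 by ring.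
rewrite e; lra.
Qed.

Lemma siciak_open (z : Cn R n) (a : R) :
  hausdorff_open [set E : ncompact R n | (a%:E < siciak (proj1_sig E) z)%E].
Proof.
move=> E /= hE.
have [_ [p [dp Hp] <-] ay] := ereal_sup_gt hE.
rewrite lte_fin in ay.
set d := poly_deg p in dp ay.
set c := modC (poly_eval p z) `^ (d%:R^-1) in ay.
have [mu [mu0 mu1 amu]] := @exists_mu a c (powR_ge0 _ _) ay.
set lam := mu ^+ d.
have lam0 : 0 < lam by rewrite exprn_gt0.
have lam1 : lam < 1 by rewrite /lam exprn_ilt1 ?ltW // -lt0n.
have M1 : 1 < lam^-1 by rewrite invf_gt1.
have [E0 cE] := proj2_sig E.
have [δ δ0 Hδ] := @near_bound (sval E) p lam^-1 cE M1 Hp.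
exists δ => // B hEB.
set q : Defs.polyC R n := @GRing.scale _ (@mpoly.mpoly_mpoly__canonical__GRing_LSemiModule n (complex R)) (lam%:C)%C p.
have lamC0 : (lam%:C)%C != 0 :> complex R.
  by rewrite eq_complex /= negb_and gt_eqF.
have dq : poly_deg q = d.
  by rewrite /poly_deg; exact: (perm_big _ (mpoly.msuppZ p lamC0)).
have evq : forall w, poly_eval q w = (lam%:C)%C * poly_eval p w.
  by move=> w; rewrite /poly_eval mpoly.mevalZ.
have modq : forall w, modC (poly_eval q w) = lam * modC (poly_eval p w).
  by move=> w; rewrite evq modCM modCE expr0n /= addr0 sqrtr_sqr ger0_norm // ltW.
have dn0 : (d%:R : R) != 0 by rewrite pnatr_eq0 -lt0n.
have lampow : lam `^ (d%:R^-1) = mu.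
  by rewrite /lam -powR_mulrn ?ltW // -powRrM mulfV // powRr1 // ltW.
apply: lt_le_trans (ereal_sup_ubound _); last first.
  exists q; last reflexivity.
  split; first by rewrite dq.
  move=> w Bw; have [e Ee de] := @haus_close E B δ w hEB Bw.
  have := Hδ w e Ee de; rewrite modq => h.
  have lamn0 : lam != 0 by rewrite gt_eqF.
  by rewrite -(mulfV lamn0) ler_wpM2l // ltW.
rewrite lte_fin dq modq powRM; [|exact: ltW|exact: modC_ge0].
set c' := modC (poly_eval p z) `^ _.
have -> : c' = c by [].
set l' := lam `^ _.
have -> : l' = mu by exact: lampow.
exact: amu.
Qed.

Lemma lne_gt (a : R) (y : \bar R) :
  (a%:E < lne y)%E = ((expR a)%:E < y)%E.
Proof.
case: y => [r| |] //=.
  case: ifPn => r0.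
    by apply/esym/negbTE; rewrite -leNgt lee_fin (le_trans r0) // ltW // expR_gt0.
  rewrite -ltNge in r0.
  by rewrite !lte_fin -ltr_expR lnK.
by rewrite !ltey.
Qed.

Lemma green_open (z : Cn R n) (a : R) :
  hausdorff_open [set E : ncompact R n | (a%:E < green (proj1_sig E) z)%E].
Proof.
have := siciak_open z (expR a).
by congr hausdorff_open; apply/seteqP; split => E /=; rewrite /green lne_gt.
Qed.

End CX.

Lemma meas_of_open (d : measure_display) (Omega : measurableType d)
  (R : realType) (n : nat) (K : Omega -> ncompact R n) (G : ncompact R n -> \bar R) :
  random_compact K ->
  (forall a : R, hausdorff_open [set E | (a%:E < G E)%E]) ->
  measurable_fun setT (G \o K).
Proof.
move=> HK HG.
apply: (measurability (@ErealGenOInfty.G R)).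
  exact: (ErealGenOInfty.measurableE R).
move=> _ [_ [r ->] <-].
rewrite setTI.
have -> : (G \o K) @^-1` `]r%:E, +oo[%classic = K @^-1` [set E | (r%:E < G E)%E].
  apply/seteqP; split => x /=; rewrite in_itv /= andbT //.
apply: HK; apply: sub_sigma_algebra; exact: HG.
Qed.

Theorem theorem6p20 (d : measure_display) (Omega : measurableType d)
  (R : realType) (n : nat) (K : Omega -> ncompact R n) :
  random_compact K ->
  forall z : Cn R n,
    measurable_fun setT (fun w : Omega => siciak (proj1_sig (K w)) z) /\
    measurable_fun setT (fun w : Omega => green (proj1_sig (K w)) z).
Proof.
move=> HK z; split.
  exact: (@meas_of_open d Omega R n K (fun E => siciak (proj1_sig E) z) HK (@siciak_open R n z)).
exact: (@meas_of_open d Omega R n K (fun E => green (proj1_sig E) z) HK (@green_open R n z)).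
Qed.
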